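(* The function $q\mapsto (p(q)-c)\big(1-F(p(q)/q)\big)$ is strictly increasing on $Q$.
   Context: Let $0<q_\ell<q_h<\infty$, $Q=[q_\ell,q_h]$, and let $c$ be a real number with $0<c<q_\ell$. Let $F$ be a probability distribution on $[0,1]$ with support $[0,1]$ admitting a twice continuously differentiable density $f:(0,1)\to\mathbb{R}_{>0}$. Define $r(v)=(1-F(v))/f(v)$ and $\psi(v)=v-r(v)$ on $(0,1)$, and assume $\psi'(v)>0$ whenever $\psi(v)>0$. For $q\in Q$, $p(q)$ is the unique maximizer over $p\in\mathbb{R}$ of $(p-c)\big(1-F(p/q)\big)$. *)

(* Defs.v *)
From Stdlib Require Import Reals.
From Coquelicot Require Import Coquelicot.
Open Scope R_scope.

Definition is_density_cdf (F f : R -> R) : Prop :=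
  (forall x, continuous F x) /\
  (forall x, x <= 0 -> F x = 0) /\
  (forall x, 1 <= x -> F x = 1) /\
  (forall x, 0 < x < 1 -> is_derive F x (f x)).

Definition pos_C2_on_01 (f : R -> R) : Prop :=
  forall x, 0 < x < 1 ->
    0 < f x /\ ex_derive f x /\ ex_derive (Derive f) x /\
    continuous (Derive (Derive f)) x.

Definition rfun (F f : R -> R) (v : R) : R := (1 - F v) / f v.
Definition psi (F f : R -> R) (v : R) : R := v - rfun F f v.

Definition profit (F : R -> R) (c q p : R) : R := (p - c) * (1 - F (p / q)).

Definition is_unique_argmax (F : R -> R) (c q pq : R) : Prop :=
  (forall p, profit F c q p <= profit F c q pq) /\
  (forall p, profit F c q p = profit F c q pq -> p = pq).

(* Main.v *)
Require Import Defs.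
From Stdlib Require Import Reals Lra.
From Coquelicot Require Import Coquelicot.
Open Scope R_scope.

Lemma F_lt1 (F f : R -> R) : is_density_cdf F f -> pos_C2_on_01 f ->
  forall x, x < 1 -> F x < 1.
Proof.
  intros [Hc [H0 [H1 Hd]]] Hf x Hx.
  destruct (Rle_lt_dec x 0) as [Hx0|Hx0].
  { rewrite H0 by lra. lra. }
  set (df := fun t => if Rlt_dec t 1 then f t else 1).
  destruct (MVT_gen F x 1 df) as [c [Hcb Heq]].
  - rewrite Rmin_left by lra; rewrite Rmax_right by lra.
    intros t Ht. unfold df. destruct (Rlt_dec t 1); [|lra]. apply Hd. lra.
  - intros t _. apply continuity_pt_filterlim. apply Hc.
  - rewrite Rmin_left in Hcb by lra; rewrite Rmax_right in Hcb by lra.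
    rewrite H1 in Heq by lra.
    assert (0 < df c).
    { unfold df. destruct (Rlt_dec c 1); [|lra]. apply Hf. lra. }
    assert (0 < df c * (1 - x)) by (apply Rmult_lt_0_compat; lra).
    lra.
Qed.

Lemma F_le1 (F f : R -> R) : is_density_cdf F f -> pos_C2_on_01 f ->
  forall x, F x <= 1.
Proof.
  intros HF Hf x. destruct (Rlt_le_dec x 1).
  - left. eapply F_lt1; eauto.
  - destruct HF as [_ [_ [H1 _]]]. rewrite H1 by lra. lra.
Qed.

Theorem lemma14 (ql qh c : R) (F f : R -> R) (p : R -> R) :
  0 < ql -> ql < qh -> 0 < c -> c < ql ->
  is_density_cdf F f ->
  pos_C2_on_01 f ->
  (forall v, 0 < v < 1 -> psi F f v > 0 -> Derive (psi F f) v > 0) ->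
  (forall q, ql <= q <= qh -> is_unique_argmax F c q (p q)) ->
  forall q1 q2, ql <= q1 -> q1 < q2 -> q2 <= qh ->
    profit F c q1 (p q1) < profit F c q2 (p q2).
Proof.
  intros Hql Hqlh Hc Hcq HF Hf _ Hmax q1 q2 H1 H12 H2.
  destruct (Hmax q1 ltac:(lra)) as [M1 _].
  destruct (Hmax q2 ltac:(lra)) as [M2 _].
  set (p1 := p q1).
  set (p0 := (c + q1) / 2).
  assert (Hpos0 : 0 < profit F c q1 p0).
  { unfold profit. apply Rmult_lt_0_compat. unfold p0; lra.
    assert (F (p0 / q1) < 1). { eapply F_lt1; eauto.
      apply Rmult_lt_reg_r with q1; [lra|]. unfold p0. field_simplify; lra. }
    lra. }
  assert (Hpos1 : 0 < profit F c q1 p1) by (specialize (M1 p0); unfold p1; lra).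
  assert (HFle := F_le1 F f HF Hf (p1 / q1)).
  unfold profit in Hpos1.
  assert (HA : p1 - c > 0 /\ 1 - F (p1 / q1) > 0).
  { destruct (Rle_lt_dec (p1 - c) 0).
    - exfalso. assert ((p1 - c) * (1 - F (p1 / q1)) <= 0).
      { apply Rmult_le_0_r; lra. } lra.
    - split; [lra|]. destruct (Rle_lt_dec (1 - F (p1/q1)) 0); [|lra].
      assert (1 - F (p1/q1) = 0) by lra. rewrite H in Hpos1. lra. }
  destruct HA as [HA HB].
  specialize (M2 (p1 * q2 / q1)).
  unfold profit in M2 |- *. fold p1.
  replace (p1 * q2 / q1 / q2) with (p1 / q1) in M2 by (field; lra).
  assert (p1 * q2 / q1 > p1).
  { apply Rmult_lt_reg_r with q1; [lra|]. field_simplify; [|lra].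
    apply Rmult_lt_compat_l; lra. }
  assert ((p1 - c) * (1 - F (p1 / q1)) < (p1 * q2 / q1 - c) * (1 - F (p1 / q1))).
  { apply Rmult_lt_compat_r; lra. }
  lra.
Qed.
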